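(* The structure $\mathbb{M}_1=(\{0,1,2\};\psi_2,\mu_2,\{0\},\{1\},\{2\})$ pp-constructs $\mathbb{M}_1''=(\{0,1,2\};\psi_2,\psi_2',\mu_2,\{0,1\},\{1,2\},\{0,2\},\{0\},\{1\},\{2\})$, and $\mathbb{M}_1''$ pp-constructs $\mathbb{M}_1$.
   Context: $\psi_2=\{(0,1),(1,0),(2,2)\}$, $\psi_2'=\{(0,1),(1,0)\}$, and $\mu_2$ is the equivalence relation on $\{0,1,2\}$ with classes $\{0,1\},\{2\}$. A relation is pp-definable in $\mathbb{A}$ if definable by a formula using the relations of $\mathbb{A}$, equality, conjunction and existential quantification. A pp-power of $\mathbb{A}$ is a structure isomorphic to one with domain $A^n$ whose $k$-ary relations, viewed as $kn$-ary relations on $A$, are pp-definable in $\mathbb{A}$. $\mathbb{A}$ pp-constructs $\mathbb{B}$ if $\mathbb{B}$ is homomorphically equivalent (homomorphisms in both directions) to a pp-power of $\mathbb{A}$. *)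

(* Defs.v *)
From mathcomp Require Import all_boot.
Set Implicit Arguments. Unset Strict Implicit. Unset Printing Implicit Defensive.

(* A structure on carrier D is given by its
   signature [sig] (the list of arities of its relations) and, for each index
   i < size sig, the relation [rel i], read as the set of sequences t with
   size t = nth 0 sig i and rel i t = true. *)
Record structure (D : Type) := Structure {
  sig : seq nat;
  rel : nat -> seq D -> bool }.

Definition arity (D : Type) (A : structure D) (i : nat) := nth 0 (sig A) i.

Definition hom (D E : Type) (A : structure D) (B : structure E) (h : D -> E) :=
  sig A = sig B /\
  forall i (t : seq D), i < size (sig A) -> size t = arity A i ->
    rel A i t -> rel B i (map h t).

Definition hom_equiv (D E : Type) (A : structure D) (B : structure E) :=
  (exists h, hom A B h) /\ (exists g, hom B A g).

Inductive ppformula :=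
| ppRel of nat & seq nat      (* R_i(x_{v1},...,x_{vk}) *)
| ppEq of nat & nat
| ppAnd of ppformula & ppformula
| ppEx of nat & ppformula.    (* exists x_n. phi *)

Definition upd (D : Type) (env : nat -> D) (x : nat) (a : D) : nat -> D :=
  fun y => if y == x then a else env y.

Fixpoint pp_sat (D : Type) (A : structure D) (env : nat -> D) (f : ppformula)
  : Prop :=
  match f with
  | ppRel i vs => i < size (sig A) /\ size vs = arity A i /\ rel A i (map env vs)
  | ppEq x y => env x = env y
  | ppAnd f g => pp_sat A env f /\ pp_sat A env g
  | ppEx x g => exists a : D, pp_sat A (upd env x a) g
  end.

(* The k-ary relation {t : size t = k, S t} is pp-definable in A: there is a
   pp-formula whose satisfying assignments, restricted to x_0..x_{k-1},
   are exactly the tuples of the relation (so phi only depends on them). *)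
Definition pp_definable (D : Type) (A : structure D) (k : nat)
  (S : seq D -> bool) :=
  exists f : ppformula, forall env : nat -> D,
    pp_sat A env f <-> S (mkseq env k).

(* C (with carrier D^n) is an n-th pp-power of A: each k-ary relation of C,
   viewed as a (k*n)-ary relation on D (by concatenating the n-tuples), is
   pp-definable in A. *)
Definition pp_power (D : Type) (A : structure D) (n : nat)
  (C : structure (n.-tuple D)) :=
  forall i, i < size (sig C) ->
    exists S : seq D -> bool,
      pp_definable A (arity C i * n) S /\
      forall t : seq (n.-tuple D), size t = arity C i ->
        rel C i t = S (flatten (map val t)).

(* A pp-constructs B: B is homomorphically equivalent to a pp-power of A.
   (Homomorphic equivalence is invariant under isomorphism, so it suffices
   to consider pp-powers with carrier exactly D^n, n >= 1.) *)
Definition pp_constructs (D E : Type) (A : structure D) (B : structure E) :=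
  exists n : nat, 0 < n /\
    exists C : structure (n.-tuple D), pp_power A C /\ hom_equiv B C.

Definition psi2 (s : seq nat) : bool := s \in [:: [:: 0; 1]; [:: 1; 0]; [:: 2; 2]].
Definition psi2' (s : seq nat) : bool := s \in [:: [:: 0; 1]; [:: 1; 0]].
Definition mu2 (s : seq nat) : bool :=
  s \in [:: [:: 0; 0]; [:: 0; 1]; [:: 1; 0]; [:: 1; 1]; [:: 2; 2]].
Definition unary (P : seq nat) (s : seq nat) : bool :=
  match s with [:: x] => x \in P | _ => false end.

Definition M1 : structure 'I_3 :=
  {| sig := [:: 2; 2; 1; 1; 1];
     rel := fun i s => let t := map val s in
       match i with
       | 0 => psi2 t | 1 => mu2 t
       | 2 => unary [:: 0] t | 3 => unary [:: 1] t | 4 => unary [:: 2] t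
       | _ => false end |}.

Definition M1'' : structure 'I_3 :=
  {| sig := [:: 2; 2; 2; 1; 1; 1; 1; 1; 1];
     rel := fun i s => let t := map val s in
       match i with
       | 0 => psi2 t | 1 => psi2' t | 2 => mu2 t
       | 3 => unary [:: 0; 1] t | 4 => unary [:: 1; 2] t | 5 => unary [:: 0; 2] t
       | 6 => unary [:: 0] t | 7 => unary [:: 1] t | 8 => unary [:: 2] t
       | _ => false end |}.

(* Main.v *)
Require Import Defs.
From mathcomp Require Import all_boot.
Set Warnings "-notation-overridden".
Set Implicit Arguments. Unset Strict Implicit. Unset Printing Implicit Defensive.

Section Gen.
Variable A : structure 'I_3.

Fixpoint evalb (env : nat -> 'I_3) (f : ppformula) : bool :=
  match f with
  | ppRel i vs => [&& i < size (Defs.sig A), size vs == arity A i & Defs.rel A i (map env vs)]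
  | ppEq x y => env x == env y
  | ppAnd f g => evalb env f && evalb env g
  | ppEx _ _ => false
  end.

Fixpoint qf (f : ppformula) : bool :=
  match f with ppEx _ _ => false | ppAnd f g => qf f && qf g | _ => true end.

Fixpoint vars (f : ppformula) : seq nat :=
  match f with
  | ppRel _ vs => vs | ppEq x y => [:: x; y]
  | ppAnd f g => vars f ++ vars g | ppEx _ _ => [::] end.

Lemma sat_evalb env f : qf f -> (pp_sat A env f <-> evalb env f).
Proof.
elim: f => [i vs|x y|f IHf g IHg|x g _] //=.
- split; first by case=> -> [-> ->]; rewrite eqxx.
  by case/and3P=> -> /eqP -> ->.
- by split; [move=> ->|move/eqP].
- case/andP=> qf1 qf2.
  by split; [case=> /(IHf qf1) -> /(IHg qf2) ->|case/andP=> /(IHf qf1) ? /(IHg qf2) ?].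
Qed.

Lemma evalb_ext env env' f : {in vars f, env =1 env'} -> evalb env f = evalb env' f.
Proof.
elim: f => [i vs|x y|f IHf g IHg|x g _] //= H.
- by have -> : map env vs = map env' vs by apply/eq_in_map.
- by rewrite !H // !inE eqxx ?orbT.
- rewrite IHf ?IHg // => z zin; apply: H; by rewrite mem_cat zin ?orbT.
Qed.

Definition mkC (n : nat) (sg : seq nat) (phi : nat -> ppformula) : structure (n.-tuple 'I_3) :=
  {| Defs.sig := sg; Defs.rel := fun i t => evalb (fun j => nth ord0 (flatten (map val t)) j) (phi i) |}.

Lemma mkC_power n sg phi :
  (forall i, i < size sg -> qf (phi i) && all (fun v => v < nth 0 sg i * n) (vars (phi i))) ->
  pp_power A (mkC n sg phi).
Proof.
move=> H i Hi; exists (fun s => evalb (fun j => nth ord0 s j) (phi i)); split => //.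
exists (phi i) => env; case/andP: (H i Hi) => q /allP av.
rewrite -(@evalb_ext env).
  exact: sat_evalb.
by move=> v /av vlt; rewrite nth_mkseq.
Qed.
End Gen.

Definition g1 (u : 2.-tuple 'I_3) : 'I_3 :=
  let x := tnth u ord0 in let y := tnth u (@Ordinal 2 1 isT) in
  if val x == 2 then x else if x == y then ord0 else (@Ordinal 3 1 isT).

Definition h1 (a : 'I_3) : 2.-tuple 'I_3 :=
  if val a == 1 then [tuple a; ord0] else [tuple a; a].

Definition c0 : 'I_3 := ord0.
Definition R a b := ppRel a b.
(* M1 indices: 0 psi2, 1 mu2, 2 {0}, 3 {1}, 4 {2} *)
Definition dom x y := R 1 [:: x; y].
Definition phi1 (i : nat) : ppformula :=
  match i with
  | 0 => ppAnd (dom 0 1) (ppAnd (dom 2 3) (ppAnd (R 0 [:: 0; 2]) (ppEq 1 3)))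
  | 1 => ppAnd (dom 0 1) (ppAnd (dom 2 3) (ppAnd (R 0 [:: 0; 2]) (ppAnd (ppEq 1 3) (R 2 [:: 1]))))
  | 2 => ppAnd (dom 0 1) (ppAnd (dom 2 3) (R 1 [:: 0; 2]))
  | 3 => ppAnd (dom 0 1) (R 2 [:: 1])
  | 4 => ppAnd (dom 0 1) (R 0 [:: 0; 1])
  | 5 => ppAnd (dom 0 1) (ppEq 0 1)
  | 6 => ppAnd (dom 0 1) (ppAnd (R 2 [:: 0]) (R 2 [:: 1]))
  | 7 => ppAnd (dom 0 1) (ppAnd (R 3 [:: 0]) (R 2 [:: 1]))
  | _ => ppAnd (dom 0 1) (R 4 [:: 0])
  end.

Definition C1 := mkC M1 2 (Defs.sig M1'') phi1.

Lemma tup2 (u : 2.-tuple 'I_3) : exists x y, u = [tuple x; y].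
Proof.
case: u => [[|x [|y []]] //] Hu; exists x, y; exact: val_inj.
Qed.
Lemma tup1 (u : 1.-tuple 'I_3) : exists x, u = [tuple x].
Proof.
case: u => [[|x []] //] Hu; exists x; exact: val_inj.
Qed.

Lemma seq1 (T : Type) (t : seq T) : size t = 1 -> exists x, t = [:: x].
Proof. by case: t => [|x []] // _; exists x. Qed.
Lemma seq2 (T : Type) (t : seq T) : size t = 2 -> exists x y, t = [:: x; y].
Proof. by case: t => [|x [|y []]] // _; exists x, y. Qed.


Ltac ord3 x := let m := fresh "m" in let H := fresh "H" in
  case: x => [[|[|[|m]]] H] //.

Lemma hom1 : hom M1'' C1 h1.
Proof.
split => // i t Hi Ht.
case: i Hi Ht => [|[|[|[|[|[|[|[|[|i]]]]]]]]] Hi Ht //.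
all: rewrite /arity /= in Ht.
all: first [ case: (seq2 Ht) => [x [y ->]]; ord3 x; ord3 y
           | case: (seq1 Ht) => [x ->]; ord3 x ].
Qed.

Lemma hom2 : hom C1 M1'' g1.
Proof.
split => // i t Hi Ht.
case: i Hi Ht => [|[|[|[|[|[|[|[|[|i]]]]]]]]] Hi Ht //.
all: rewrite /arity /= in Ht.
all: first [ case: (seq2 Ht) => [u [v ->]]; case: (tup2 u) => [x1 [y1 ->]]; case: (tup2 v) => [x2 [y2 ->]];
             ord3 x1; ord3 y1; ord3 x2; ord3 y2
           | case: (seq1 Ht) => [u ->]; case: (tup2 u) => [x1 [y1 ->]]; ord3 x1; ord3 y1 ].
Qed.

Definition phi2 (i : nat) : ppformula :=
  match i with
  | 0 => R 0 [:: 0; 1] | 1 => R 2 [:: 0; 1] | 2 => R 6 [:: 0] | 3 => R 7 [:: 0]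
  | _ => R 8 [:: 0] end.
Definition C2 := mkC M1'' 1 (Defs.sig M1) phi2.
Definition h2 (a : 'I_3) : 1.-tuple 'I_3 := [tuple a].
Definition g2 (u : 1.-tuple 'I_3) : 'I_3 := tnth u ord0.

Lemma hom3 : hom M1 C2 h2.
Proof.
split => // i t Hi Ht.
case: i Hi Ht => [|[|[|[|[|i]]]]] Hi Ht //.
all: rewrite /arity /= in Ht.
all: first [ case: (seq2 Ht) => [x [y ->]]; ord3 x; ord3 y
           | case: (seq1 Ht) => [x ->]; ord3 x ].
Qed.

Lemma hom4 : hom C2 M1 g2.
Proof.
split => // i t Hi Ht.
case: i Hi Ht => [|[|[|[|[|i]]]]] Hi Ht //.
all: rewrite /arity /= in Ht.
all: first [ case: (seq2 Ht) => [u [v ->]]; case: (tup1 u) => [x1 ->]; case: (tup1 v) => [x2 ->];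
             ord3 x1; ord3 x2
           | case: (seq1 Ht) => [u ->]; case: (tup1 u) => [x1 ->]; ord3 x1 ].
Qed.

Theorem lemma6p4 : pp_constructs M1 M1'' /\ pp_constructs M1'' M1.
Proof.
split.
- exists 2; split => //; exists C1; split.
  + apply: mkC_power => i Hi.
    by case: i Hi => [|[|[|[|[|[|[|[|[|i]]]]]]]]] Hi.
  + by split; [exists h1; exact: hom1 | exists g1; exact: hom2].
- exists 1; split => //; exists C2; split.
  + apply: mkC_power => i Hi.
    by case: i Hi => [|[|[|[|[|i]]]]] Hi.
  + by split; [exists h2; exact: hom3 | exists g2; exact: hom4].
Qed.
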